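(* Let $G$ be a tight $(2P_2+P_1)$-free graph with $m=m(G)$, dense set $T=\{u_1,\dots,u_m\}$, and $S=\delta T$. Let $c$ be a b-colouring of $G$ with exactly $m$ colours and colour classes $V_1,\dots,V_m$, indexed so that $V_i\cap T=\{u_i\}$ for each $i$. For non-adjacent $u\in T$ and $s\in S$, let $T(u,s)$ be the set of neighbours of $s$ in $T$ that are not adjacent to $u$. If $|V_i|\geq 3$ for some $i$ and $s\in S\cap V_i$, then every vertex of $T(u_i,s)$ is adjacent to every vertex of $T\setminus(T(u_i,s)\cup\{u_i\})$.
   Context: A colouring of $G$ is a map $c:V(G)\to\mathbb{Z}^+$ with adjacent vertices receiving distinct colours. A vertex is b-chromatic under $c$ if it is adjacent to a vertex of every colour used by $c$ other than its own; a b-colouring is a colouring in which every colour class has a b-chromatic vertex. $m(G)$ is the largest $k$ such that $G$ has at least $k$ vertices of degree at least $k-1$; a vertex of degree at least $m(G)-1$ is dense; $G$ is tight if it has exactly $m(G)$ dense vertices, each of degree exactly $m(G)-1$. $\delta T=\left(\bigcup_{u\in T}N(u)\right)\setminus T$. (In any b-colouring of a tight graph with $m(G)$ colours, each colour class contains exactly one vertex of $T$, so the indexing above exists.) *)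

(* Defs.v *)
From mathcomp Require Import all_boot.
Set Implicit Arguments. Unset Strict Implicit. Unset Printing Implicit Defensive.

Section Graphs.
Variables (V : finType) (g : rel V).

Definition simple_graph : Prop := symmetric g /\ irreflexive g.

Definition nbhd (v : V) : {set V} := [set w | g v w].
Definition deg (v : V) : nat := #|nbhd v|.

Definition m_index : nat :=
  \max_(k < #|V|.+1 | k <= #|[set v | k.-1 <= deg v]|) (k : nat).

Definition dense_set : {set V} := [set v | m_index.-1 <= deg v].

Definition tight : Prop :=
  #|dense_set| = m_index /\ forall v, v \in dense_set -> deg v = m_index.-1.

Definition delta (X : {set V}) : {set V} :=
  (\bigcup_(u in X) nbhd u) :\: X.

Definition free_2P2P1 : Prop :=
  ~ exists a b c d e : V,
      uniq [:: a; b; c; d; e] /\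
      g a b /\ g c d /\
      ~~ g a c /\ ~~ g a d /\ ~~ g b c /\ ~~ g b d /\
      ~~ g e a /\ ~~ g e b /\ ~~ g e c /\ ~~ g e d.

Definition colouring (c : V -> nat) : Prop :=
  (forall v, 0 < c v) /\ (forall v w, g v w -> c v != c w).

Definition colours_used (c : V -> nat) : seq nat := undup [seq c v | v <- enum V].

Definition b_chromatic (c : V -> nat) (v : V) : Prop :=
  forall j, j \in colours_used c -> j != c v -> exists w, g v w /\ c w = j.

Definition b_colouring (c : V -> nat) : Prop :=
  colouring c /\
  forall j, j \in colours_used c -> exists v, c v = j /\ b_chromatic c v.

Definition colour_class (c : V -> nat) (j : nat) : {set V} := [set v | c v == j].

Definition T_us (X : {set V}) (u s : V) : {set V} :=
  [set t in X | g s t && ~~ g u t].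

End Graphs.

(* Main.v *)
Require Import Defs.
From mathcomp Require Import all_boot.
From mathcomp Require Import zify.
Set Implicit Arguments. Unset Strict Implicit. Unset Printing Implicit Defensive.

Lemma cover_le (V : finType) (c : V -> nat) (s : seq nat) (A : {set V}) :
  uniq s -> (forall j, j \in s -> exists w, w \in A /\ c w = j) -> size s <= #|A|.
Proof.
move=> us H; rewrite cardE -(size_map c); apply: uniq_leq_size => // j /H [w [wA <-]].
by apply: map_f; rewrite mem_enum.
Qed.

Lemma mem_cu (V : finType) (c : V -> nat) v : c v \in colours_used c.
Proof. by rewrite mem_undup; apply: map_f; rewrite mem_enum. Qed.

Lemma bdeg (V : finType) (g : rel V) (c : V -> nat) v :
  b_chromatic g c v -> (size (colours_used c)).-1 <= deg g v.
Proof.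
move=> Hb; rewrite -(size_rem (mem_cu c v)); rewrite /deg; apply: (@cover_le _ c); first exact/rem_uniq/undup_uniq.
move=> j; rewrite mem_rem_uniq ?undup_uniq // => /andP [jn jC].
by have [w [gw cw]] := Hb j jC jn; exists w; split => //; rewrite /nbhd inE.
Qed.

Theorem mainTheorem9 (V : finType) (g : rel V) (c : V -> nat) :
  simple_graph g -> free_2P2P1 g -> tight g ->
  b_colouring g c -> size (colours_used c) = m_index g ->
  forall (u s : V),
    u \in dense_set g ->
    s \in delta g (dense_set g) ->
    c s = c u ->
    3 <= #|colour_class c (c u)| ->
    forall x y : V,
      x \in T_us g (dense_set g) u s ->
      y \in dense_set g :\: (T_us g (dense_set g) u s :|: [set u]) ->
      g x y.
Proof.
move=> [sym irr] free [cardT degT] [[cpos cprop] bcol] sizeC u s uT sS csu c3 x y xT yT.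
have inT : forall v, b_chromatic g c v -> v \in dense_set g.
  by move=> v bv; rewrite inE -sizeC; apply: bdeg.
have Hinj : forall a b, a \in dense_set g -> b \in dense_set g -> c a = c b -> a = b.
  move=> a b aT bT cab; apply/eqP; apply/negPn/negP => nab.
  have: size (colours_used c) <= #|dense_set g :\ b|.
    apply: (@cover_le _ c); first exact: undup_uniq.
    move=> j jC; have [v [cv bv]] := bcol j jC.
    have vT := inT v bv.
    case: (v =P b) => [vb | vb].
      by exists a; rewrite in_setD1 aT andbT; split => //; rewrite cab -vb.
    by exists v; rewrite in_setD1 vT andbT; split => //; apply/eqP.
  have := cardsD1 b (dense_set g); rewrite bT; lia.
have Hb : forall v, v \in dense_set g -> b_chromatic g c v.
  move=> v vT; have [w [cw bw]] := bcol (c v) (mem_cu c v).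
  by rewrite -(Hinj w v (inT w bw) vT cw).
have Hone : forall v w1 w2, v \in dense_set g -> g v w1 -> g v w2 -> c w1 = c w2 -> w1 = w2.
  move=> v w1 w2 vT g1 g2 c12; apply/eqP; apply/negPn/negP => n12.
  have: (size (colours_used c)).-1 <= #|nbhd g v :\ w2|.
    rewrite -(size_rem (mem_cu c v)); apply: (@cover_le _ c); first exact/rem_uniq/undup_uniq.
    move=> j; rewrite mem_rem_uniq ?undup_uniq // => /andP [jn jC].
    have [w [gw cw]] := Hb v vT j jC jn.
    case: (w =P w2) => [ew | ew].
      by exists w1; rewrite /nbhd !inE g1 andbT; split => //; rewrite c12 -ew.
    by exists w; rewrite /nbhd !inE gw andbT; split => //; apply/eqP.
  have h2 : w2 \in nbhd g v by rewrite /nbhd inE.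
  have := cardsD1 w2 (nbhd g v); rewrite h2.
  have := degT v vT; rewrite /deg sizeC; lia.
have neqc : forall a b, c a != c b -> a != b by move=> a b; apply: contraNneq => ->.
move: xT; rewrite inE => /andP [xT /andP [gsx nux]].
move: yT; rewrite in_setD in_setU in_set1 negb_or => /andP [/andP [nyT nyu] yT].
move: sS; rewrite inE => /andP [nsT _].
have cxu : c x != c u by rewrite -csu eq_sym; apply: cprop.
have cyu : c y != c u by apply: contra nyu => /eqP /Hinj -> //; apply/eqP.
have ngsu : ~~ g s u by apply/negP => /cprop; rewrite csu eqxx.
case gxy: (g x y) => //.
have xy : x != y by apply: contra nyT => /eqP <-; rewrite inE xT gsx nux.
have xs : x != s by apply: contraNneq nsT => <-.
have su : s != u by apply: contraNneq nsT => ->.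
have sy : s != y by apply: contraNneq nsT => ->.
have xu : x != u by apply: neqc.
have yu : y != u by [].
case guy: (g u y).
- have: 0 < #|colour_class c (c u) :\ u :\ s|.
    have h1 : u \in colour_class c (c u) by rewrite /colour_class inE eqxx.
    have h2 : s \in colour_class c (c u) :\ u by rewrite in_setD1 su /colour_class inE csu eqxx.
    have := cardsD1 u (colour_class c (c u)); have := cardsD1 s (colour_class c (c u) :\ u).
    rewrite h1 h2 => e1 e2; move: c3; rewrite e2 e1; by case: #|colour_class c (c u) :\ u :\ s|.
  case/card_gt0P => w; rewrite !in_setD1 /colour_class inE => /and3P [ws wu /eqP cw].
  have nsy : ~~ g s y.
    by apply/negP => gsy; move: su; rewrite (Hone y s u yT) ?eqxx // sym.
  exfalso; apply: free; exists x, s, u, y, w.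
  have xw : x != w by apply: neqc; rewrite cw.
  have yw : y != w by apply: neqc; rewrite cw.
  rewrite /= !inE !negb_or.
  split; first by rewrite xs xu xy xw (eq_sym s w) ws sy su (eq_sym u y) yu (eq_sym u w) wu yw.
  split; first by rewrite sym.
  split; first by [].
  split; first by rewrite sym nux.
  split; first by rewrite gxy.
  split; first by [].
  split; first by [].
  split; first by apply/negP => gwx; move: ws; rewrite (Hone x w s xT) ?eqxx ?csu // sym.
  split; first by apply/negP => /cprop; rewrite cw csu eqxx.
  split; first by apply/negP => /cprop; rewrite cw eqxx.
  by apply/negP => gwy; move: wu; rewrite (Hone y w u yT) ?eqxx ?cw // sym.
- have gsy : g s y = false.
    apply/negP => gsy; move: nyT; by rewrite inE yT gsy guy.
  have [z [gyz cz]] := Hb y yT (c u) (mem_cu c u) ltac:(by rewrite eq_sym).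
  exfalso; apply: free; exists x, s, y, z, u.
  have xz : x != z by apply: neqc; rewrite cz.
  have sz : s != z by apply: contraNneq (negbT gsy) => ->; rewrite sym.
  have yz : y != z by apply/eqP => e; move: gyz; rewrite e irr.
  have zu : z != u by apply: contraNneq (negbT guy) => e; rewrite -e sym.
  rewrite /= !inE !negb_or.
  split; first by rewrite xs xy xz xu sy sz su yz yu zu.
  split; first by rewrite sym.
  split; first by [].
  split; first by rewrite gxy.
  split; first by apply/negP => gxz; move: sz; rewrite (Hone x z s xT) ?eqxx ?csu // sym.
  split; first by rewrite gsy.
  split; first by apply/negP => /cprop; rewrite cz csu eqxx.
  split; first by [].
  split; first by apply/negP => /cprop; rewrite csu eqxx.
  split; first by rewrite guy.
  by apply/negP => /cprop; rewrite cz eqxx.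
Qed.
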